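(* For every $N\in\mathbb{N}$, with $\pi_N$ the law of the number of fixed points of a uniformly random permutation of $\{1,\dots,N\}$ and $\mathcal{P}$ the Poisson law of parameter $1$, $$\|\pi_N-\mathcal{P}\|_{\mathrm{tv}}\le\frac{2^{N+1}}{(N+1)!}.$$
   Context: $\|\mu-\mu'\|_{\mathrm{tv}}=\sup_{A\subset\mathbb{Z}_+}|\mu(A)-\mu'(A)|=\sum_n(\mu(n)-\mu'(n))_+$. *)

(* Defs.v *)
From HB Require Import structures.
From mathcomp Require Import all_boot all_order all_algebra all_fingroup.
From mathcomp Require Import all_classical all_reals all_analysis.
Set Implicit Arguments. Unset Strict Implicit. Unset Printing Implicit Defensive.
Import Order.TTheory GRing.Theory Num.Theory.
Local Open Scope ring_scope.

Definition nfix (N : nat) (s : 'S_N) : nat := #|[set i : 'I_N | s i == i]|.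

Definition piN (R : realType) (N : nat) (k : nat) : R :=
  (#|[set s : 'S_N | nfix s == k]|%:R) / (N`!)%:R.

Definition poisson1 (R : realType) (k : nat) : R := expR (-1) / (k`!)%:R.

Definition tv (R : realType) (mu nu : nat -> R) : R :=
  \big[+%R/0%R]_(0 <= n <oo) Num.max (mu n - nu n) 0.

(* Main.v *)
Require Import Defs.
From HB Require Import structures.
From mathcomp Require Import all_boot all_order all_algebra all_fingroup.
From mathcomp Require Import all_classical all_reals all_analysis.
From mathcomp Require Import ring lra.
Import Order.TTheory GRing.Theory Num.Theory.
Import numFieldNormedType.Exports.
Local Open Scope ring_scope.

Section Comb.
Variable N : nat.
Definition Fx (s : 'S_N) := [set i | s i == i].

Lemma sub_fix_perm_on (J : {set 'I_N}) (s : 'S_N) :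
  (J \subset Fx s) = perm_on (~: J) s.
Proof.
rewrite /perm_on /=. apply/fintype.subsetP/fintype.subsetP => H x; rewrite !inE.
  move=> sx; apply/negP => /H; rewrite inE => /eqP sx'.
  by rewrite sx' eqxx in sx.
move=> xJ; apply/negPn/negP => sx.
by have := H x; rewrite !inE => /(_ sx); rewrite xJ.
Qed.

Lemma sumA j : (j <= N)%N ->
  (\sum_(s : 'S_N) 'C(nfix s, j) = 'C(N, j) * (N - j)`!)%N.
Proof.
move=> jN.
transitivity (\sum_(s : 'S_N) \sum_(J : {set 'I_N} | #|J| == j) (J \subset Fx s : nat))%N.
  apply: eq_bigr => s _; rewrite /nfix -cards_draws -sum1_card.
  rewrite big_mkcond [RHS]big_mkcond; apply: eq_bigr => J _; rewrite inE /Fx.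
  by case: (#|J| == j); case: (J \subset _).
rewrite exchange_big /=.
rewrite (eq_bigr (fun _ => (N - j)`!)) => [|J /eqP HJ]; last first.
  rewrite (eq_bigr (fun s => (perm_on (~: J) s : nat))) => [|s _]; last first.
    by rewrite sub_fix_perm_on.
  transitivity (\sum_(s | perm_on (~: J) s) 1)%N.
    by rewrite [RHS]big_mkcond; apply: eq_bigr => s _; case: (perm_on _ _).
  rewrite sum1dep_card cardsE card_perm.
  have := cardsC J; rewrite card_ord HJ => h.
  by rewrite -[in RHS]h addKn.
have -> : 'C(N, j) = #|[set A : {set 'I_N} | #|A| == j]| by rewrite card_draws card_ord.
rewrite -sum1dep_card big_distrl /=.
by apply: eq_bigr => *; rewrite mul1n.
Qed.
End Comb.

Lemma bin_mul_id m k i : (k + i <= m)%N ->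
  ('C(k + i, k) * 'C(m, k + i) = 'C(m, k) * 'C(m - k, i))%N.
Proof.
move=> H.
have h1 := bin_fact (leq_addr i k); rewrite addKn in h1.
have h2 := bin_fact H; rewrite subnDA in h2.
have km : (k <= m)%N by apply: leq_trans H; exact: leq_addr.
have h3 := bin_fact km.
have im : (i <= m - k)%N by rewrite leq_subRL // addnC.
have h4 := bin_fact im.
apply/eqP; rewrite -(@eqn_pmul2r (k`! * i`! * (m - k - i)`!)); last first.
  by rewrite !muln_gt0 !fact_gt0.
have e1 : ('C(k + i, k) * 'C(m, k + i) * (k`! * i`! * (m - k - i)`!) =
   'C(m, k + i) * ((('C(k + i, k) * (k`! * i`!))) * (m - k - i)`!))%N by ring.
have e2 : ('C(m, k) * 'C(m - k, i) * (k`! * i`! * (m - k - i)`!) =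
   'C(m, k) * (k`! * ('C(m - k, i) * (i`! * (m - k - i)`!))))%N by ring.
by rewrite e1 e2 h1 h2 h4 h3.
Qed.

Lemma inv_id (R : realType) (m k M : nat) : (m <= M)%N ->
  \sum_(j < M.+1) (-1) ^+ (j - k) * 'C(j, k)%:R * 'C(m, j)%:R = (m == k)%:R :> R.
Proof.
move=> mM.
rewrite -(big_mkord xpredT (fun j => (-1) ^+ (j - k) * 'C(j, k)%:R * 'C(m, j)%:R)).
rewrite (@big_cat_nat _ _ _ m.+1) //=.
rewrite [X in _ + X]big_nat_cond [X in _ + X]big1 ?addr0; last first.
  move=> j /andP[/andP[hj _] _].
  by rewrite (bin_small hj) mulr0.
have [km|mk] := leqP k m; last first.
  rewrite big_nat_cond big1; last first.
    move=> j /andP[/andP[_ hj] _].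
    by rewrite (bin_small (leq_trans hj mk)) mulr0 mul0r.
  by rewrite (ltn_eqF mk).
rewrite (@big_cat_nat _ _ _ k) //=; last by apply: leqW.
rewrite [X in X + _]big_nat_cond [X in X + _]big1 ?add0r; last first.
  move=> j /andP[/andP[_ hj] _].
  by rewrite (bin_small hj) mulr0 mul0r.
rewrite -{1}(add0n k) big_addn big_mkord.
rewrite (eq_bigr (fun j : 'I__ => 'C(m, k)%:R * ((-1) ^+ j * 'C(m - k, j)%:R))); last first.
  move=> j _; rewrite addnK -mulrA -natrM (addnC j k) bin_mul_id ?natrM; first ring.
  by have := ltn_ord j; rewrite ltn_subRL ltnS.
rewrite -big_distrr /= subSn //.
have := exprDn (1 : R) (-1) (m - k).
rewrite addrN expr0n => h.
rewrite (eq_bigr (fun i : 'I__ => 1 ^+ (m - k - i) * (-1) ^+ i *+ 'C(m - k, i))); last first.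
  by move=> i _; rewrite expr1n mul1r mulr_natr.
rewrite -h; have [->|ne] := eqVneq m k; first by rewrite subnn binn eqxx mulr1.
have : (0 < m - k)%N by rewrite subn_gt0 ltn_neqAle eq_sym ne km.
by move=> /gtn_eqF ->; rewrite mulr0.
Qed.


Lemma nfix_le {N} (s : 'S_N) : (nfix s <= N)%N.
Proof. by rewrite /nfix -[X in (_ <= X)%N](card_ord N) max_card. Qed.

Lemma card_sum (R : realType) N k :
  #|[set s : 'S_N | nfix s == k]|%:R =
  \sum_(j < N.+1) (-1) ^+ (j - k) * 'C(j, k)%:R * ('C(N, j) * (N - j)`!)%:R :> R.
Proof.
rewrite -sum1dep_card natr_sum big_mkcond /=.
rewrite (eq_bigr (fun s : 'S_N => \sum_(j < N.+1) (-1) ^+ (j - k) * 'C(j, k)%:R * 'C(nfix s, j)%:R :> R)); last first.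
  by move=> s _; rewrite inv_id ?nfix_le //; case: (nfix s == k).
rewrite exchange_big /=; apply: eq_bigr => j _.
rewrite -big_distrr /= -sumA; last by rewrite -ltnS.
by rewrite natr_sum.
Qed.

Lemma piN_formula (R : realType) N k : (k <= N)%N ->
  piN R N k = (k`!%:R)^-1 * series (exp_coeff (-1 : R)) (N - k).+1.
Proof.
move=> kN; rewrite /piN card_sum mulr_suml.
rewrite (eq_bigr (fun j : 'I_N.+1 => (-1) ^+ (j - k) * 'C(j, k)%:R / (j`!%:R))); last first.
  move=> j _; have jN : (j <= N)%N by rewrite -ltnS.
  have h := bin_fact jN.
  rewrite -[in X in _ / X]h !natrM -!mulrA; congr (_ * (_ * _)).
  have c0 : 'C(N, j)%:R != 0 :> R by rewrite pnatr_eq0 -lt0n bin_gt0.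
  have f1 : j`!%:R != 0 :> R by rewrite pnatr_eq0 -lt0n fact_gt0.
  have f2 : (N - j)`!%:R != 0 :> R by rewrite pnatr_eq0 -lt0n fact_gt0.
  by field; rewrite c0 f1 f2.
rewrite -(big_mkord xpredT (fun j => (-1) ^+ (j - k) * 'C(j, k)%:R / (j`!%:R) : R)).
rewrite (@big_cat_nat _ _ _ k) //=; last by apply: leqW.
rewrite [X in X + _]big_nat_cond [X in X + _]big1 ?add0r; last first.
  move=> j /andP[/andP[_ hj] _].
  by rewrite (bin_small hj) mulr0 mul0r.
rewrite -{1}(add0n k) big_addn /series /= big_distrr /= subSn //.
apply: eq_bigr => i _.
rewrite addnK (addnC i k).
have h := bin_fact (leq_addr i k); rewrite addKn in h.
rewrite -h !natrM.
have c0 : 'C(k + i, k)%:R != 0 :> R by rewrite pnatr_eq0 -lt0n bin_gt0 leq_addr.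
have f1 : k`!%:R != 0 :> R by rewrite pnatr_eq0 -lt0n fact_gt0.
have f2 : i`!%:R != 0 :> R by rewrite pnatr_eq0 -lt0n fact_gt0.
rewrite /exp_coeff /=. by field; rewrite c0 f1 f2.
Qed.
Local Open Scope classical_set_scope.
Lemma expR_lb (R : realType) j :
  series (exp_coeff (-1 : R)) (2 * j)%N <= expR (-1).
Proof.
set u := exp_coeff (-1 : R).
have cs : series u @ \oo --> (expR (-1) : R) by exact: is_cvg_series_exp_coeff.
have c2 : (fun j => (2 * j)%N) @ \oo --> \oo.
  apply/cvgnyPge => A; near=> n.
  have : (A <= n)%N by near: n; exact: nbhs_infty_ge.
  move=> h; apply: (leq_trans h); rewrite mul2n -addnn leq_addl //.
have cw : (fun j => series u (2 * j)%N) @ \oo --> (expR (-1) : R).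
  exact: (cvg_comp _ _ c2 cs).
have nd : nondecreasing_seq (fun j => series u (2 * j)%N).
  apply/nondecreasing_seqP => n.
  rewrite /series /= mulnS !add2n big_nat_recr //= big_nat_recr //=.
  rewrite -addrA lerDl /u /exp_coeff /=.
  rewrite !exprS (_ : (-1 : R) ^+ (2 * n)%N = 1); last first.
    by rewrite exprM sqrrN expr1n expr1n.
  rewrite mulr1 mulN1r mul1r subr_ge0.
  rewrite lef_pV2 ?posrE ?ltr0n ?fact_gt0 // ler_nat factS.
  by rewrite leq_pmull.
rewrite -(cvg_lim _ cw) //.
apply: (nondecreasing_cvgn_le nd _ j); by apply/cvg_ex; eexists; exact: cw.
Unshelve. all: by end_near.
Qed.

Local Close Scope classical_set_scope.

Lemma series_odd (R : realType) j :
  series (exp_coeff (-1 : R)) (2 * j).+1 =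
  series (exp_coeff (-1 : R)) (2 * j.+1)%N + (((2 * j).+1)`!%:R)^-1.
Proof.
rewrite mulnS add2n [in RHS]/series /= big_nat_recr //=.
rewrite /exp_coeff /= exprS (_ : (-1 : R) ^+ (2 * j) = 1); last first.
  by rewrite exprM sqrrN expr1n expr1n.
by rewrite mulr1 mulN1r subrK.
Qed.

Lemma diff_bound (R : realType) m :
  series (exp_coeff (-1 : R)) m.+1 - expR (-1) <= (m.+1`!%:R)^-1.
Proof.
have ge : 0 <= (m.+1`!%:R : R)^-1 by rewrite invr_ge0 ler0n.
have := odd_double_half m.+1; case: (odd m.+1) => h.
  rewrite -h add1n -mul2n series_odd.
  have := expR_lb R (m.+1./2.+1); lra.
rewrite add0n -mul2n in h.
have := expR_lb R (m.+1)./2; rewrite h => hh.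
by apply: le_trans ge; rewrite subr_le0.
Qed.

Lemma term_bound (R : realType) N k : (k <= N)%N ->
  Num.max (piN R N k - poisson1 R k) 0 <= ((k`! * (N - k).+1`!)%:R)^-1.
Proof.
move=> kN; rewrite ge_max invr_ge0 ler0n andbT.
rewrite piN_formula // /poisson1 (mulrC (expR _)) -mulrBr natrM invfM.
rewrite ler_pM2l ?invr_gt0 ?ltr0n ?fact_gt0 //.
exact: diff_bound.
Qed.

Lemma term_zero (R : realType) N k : (N < k)%N ->
  Num.max (piN R N k - poisson1 R k) 0 = 0.
Proof.
move=> Nk; apply: max_r.
have -> : piN R N k = 0.
  rewrite /piN (_ : #|[set s : 'S_N | nfix s == k]| = 0%N) ?mul0r //.
  apply: eq_card0 => s; rewrite !inE; apply/negbTE.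
  by rewrite neq_ltn (leq_ltn_trans (nfix_le s) Nk).
by rewrite sub0r oppr_le0 /poisson1 divr_ge0 ?ler0n // ltW // expR_gt0.
Qed.

Lemma sum_bound (R : realType) N :
  \sum_(k < N.+1) ((k`! * (N - k).+1`!)%:R : R)^-1 <= 2 ^+ N.+1 / (N.+1`!)%:R.
Proof.
have -> : \sum_(k < N.+1) ((k`! * (N - k).+1`!)%:R : R)^-1 =
    \sum_(k < N.+1) 'C(N.+1, k)%:R / (N.+1`!)%:R.
  apply: eq_bigr => k _.
  have kN : (k <= N.+1)%N by apply: leqW; rewrite -ltnS.
  have h := bin_fact kN.
  rewrite -[in RHS]h -subSn ?natrM; last by rewrite -ltnS.
  have c0 : 'C(N.+1, k)%:R != 0 :> R by rewrite pnatr_eq0 -lt0n bin_gt0.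
  have f1 : k`!%:R != 0 :> R by rewrite pnatr_eq0 -lt0n fact_gt0.
  have f2 : (N.+1 - k)`!%:R != 0 :> R by rewrite pnatr_eq0 -lt0n fact_gt0.
  by field; rewrite c0 f1 f2.
rewrite -mulr_suml ler_pM2r ?invr_gt0 ?ltr0n ?fact_gt0 //.
have := exprDn (1 : R) 1 N.+1; rewrite (_ : (1 : R) + 1 = 2) // => ->.
rewrite [X in _ <= X]big_ord_recr /=.
rewrite (eq_bigr (fun i : 'I_N.+1 => 1 ^+ (N.+1 - i) * 1 ^+ i *+ 'C(N.+1, i) : R)); last first.
  by move=> i _; rewrite !expr1n mul1r.
by rewrite lerDl !expr1n mul1r ler0n.
Qed.

Theorem mainTheorem15 (R : realType) (N : nat) :
  tv (piN R N) (@poisson1 R) <= 2 ^+ N.+1 / (N.+1`!)%:R.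
Proof.
rewrite /tv.
have -> : limn (fun n => \sum_(0 <= i < n) Num.max (piN R N i - poisson1 R i) 0) =
    \sum_(0 <= i < N.+1) Num.max (piN R N i - poisson1 R i) 0.
  apply: norm_lim_near_cst; near=> n.
  have hn : (N.+1 <= n)%N by near: n; exact: nbhs_infty_ge.
  rewrite (@big_cat_nat _ _ _ N.+1) //= [X in _ + X]big_nat_cond.
  rewrite [X in _ + X]big1 ?addr0 // => i /andP[/andP[hi _] _].
  exact: term_zero.
rewrite big_mkord; apply: le_trans (sum_bound R N).
by apply: ler_sum => k _; apply: term_bound; rewrite -ltnS.
Unshelve. all: by end_near.
Qed.
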